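(* Let $\kappa\ge2$. Every tensor $P$ in $\mathrm{EE}_\kappa(((a,b),c))$ lies in the algebraic variety defined by the degree-$(2\kappa+1)$ polynomials given by all $(2\kappa+1)\times(2\kappa+1)$ minors of each of the $2\kappa$ matrices (for $k\in[\kappa]$) $$\begin{pmatrix}0&P_{\cdot\cdot k}&P_{\cdot+\cdot}\\-P_{\cdot\cdot k}^T&0&P_{+\cdot\cdot}\\-P_{\cdot+\cdot}^T&-P_{+\cdot\cdot}^T&0\end{pmatrix}\quad\text{and}\quad\begin{pmatrix}0&P_{\cdot+\cdot}^T&P_{+\cdot\cdot}^T\\-P_{\cdot+\cdot}&0&P_{\cdot\cdot k}\\-P_{+\cdot\cdot}&-P_{\cdot\cdot k}^T&0\end{pmatrix}.$$ That is, each of these $3\kappa\times 3\kappa$ matrices has rank at most $2\kappa$.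
   Context: A $\kappa$-state site pattern probability tensor on $X$ ($|X|=n$) is an $n$-way $\kappa\times\cdots\times\kappa$ array with one index per taxon, non-negative entries summing to 1. $P_Y$ is the marginalization to $Y\subseteq X$; $\psi^+|_Y$ is the induced rooted subtree; a 2-clade is a pair of leaves that are exactly the leaf descendants of some vertex. $\mathrm{UE}_\kappa(\psi^+)$: all such tensors $P$ such that for every $Y\subseteq X$ and every 2-clade $\{x,y\}$ of $\psi^+|_Y$, $P_Y$ is invariant under exchanging the $x$ and $y$ indices. For a $\kappa\times\kappa$ matrix $M$, $P*_kM$ is the tensor whose entry at $(i_1,\dots,i_n)$ is the $i_k$-th entry of $vM$, $v$ the row vector obtained by fixing all indices $\ell\ne k$ to $i_\ell$; $P*(M_1,\dots,M_n)=(\cdots(P*_1M_1)\cdots)*_nM_n$. $\mathrm{EE}_\kappa(\psi^+)$: all $\kappa$-state site pattern probability tensors $P$ such that $P*(M_1,\dots,M_n)=\tilde P$ for some non-singular Markov matrices $M_i$ and some non-negative $\tilde P\in\mathrm{UE}_\kappa(\psi^+)$. For a 3-way tensor $P=(p_{ijk})$ with indices ordered $a,b,c$: $P_{+\cdot\cdot}$ has $(j,k)$-entry $\sum_ip_{ijk}$; $P_{\cdot+\cdot}$ has $(i,k)$-entry $\sum_jp_{ijk}$; $P_{\cdot\cdot k}$ has $(i,j)$-entry $p_{ijk}$; $^T$ is transpose. *)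

(* Defs.v *)
From HB Require Import structures.
From mathcomp Require Import all_boot all_order all_algebra all_fingroup.
Set Implicit Arguments. Unset Strict Implicit. Unset Printing Implicit Defensive.
Import Order.TTheory GRing.Theory Num.Theory.
Local Open Scope ring_scope.

Section Tensors.
Variables (R : realFieldType) (n kappa : nat).

(* A site pattern (index) assigns a state in 'I_kappa to each taxon in 'I_n. *)
Definition site := {ffun 'I_n -> 'I_kappa}.

Definition tensor := site -> R.

Definition prob_tensor (P : tensor) : Prop :=
  (forall i, 0 <= P i) /\ \sum_(i : site) P i = 1.

(* Marginalization P_Y, represented as a tensor on all of X whose value only
   depends on the coordinates in Y. *)
Definition marg (Y : {set 'I_n}) (P : tensor) : tensor :=
  fun i => \sum_(j : site | [forall t in Y, j t == i t]) P j.

Definition swap_site (x y : 'I_n) (i : site) : site := [ffun t => i (tperm x y t)].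

(* A rooted tree on X = 'I_n, given by its clusters: the sets of leaf
   descendants of its vertices. *)
Definition rtree := {set {set 'I_n}}.

(* {x,y} is a 2-clade of the induced rooted subtree psi|_Y: the clusters of
   psi|_Y are exactly the non-empty sets C :&: Y for C a cluster of psi. *)
Definition is_2clade (psi : rtree) (Y : {set 'I_n}) (x y : 'I_n) : Prop :=
  x != y /\ exists2 C, C \in psi & C :&: Y = [set x; y].

Definition UE (psi : rtree) (P : tensor) : Prop :=
  prob_tensor P /\
  forall (Y : {set 'I_n}) (x y : 'I_n), is_2clade psi Y x y ->
    forall i : site, marg Y P (swap_site x y i) = marg Y P i.

Definition mode_mul (k : 'I_n) (M : 'M[R]_kappa) (P : tensor) : tensor :=
  fun i => \sum_(l : 'I_kappa) P [ffun t => if t == k then l else i t] * M l (i k).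

Definition multi_mul (P : tensor) (Ms : 'I_n -> 'M[R]_kappa) : tensor :=
  foldl (fun Q k => mode_mul k (Ms k) Q) P (enum 'I_n).

Definition markov (M : 'M[R]_kappa) : Prop :=
  (forall i j, 0 <= M i j) /\ forall i, \sum_j M i j = 1.

Definition EE (psi : rtree) (P : tensor) : Prop :=
  prob_tensor P /\
  exists Ms : 'I_n -> 'M[R]_kappa,
    (forall t, markov (Ms t) /\ Ms t \in unitmx) /\
    exists Pt : tensor, (forall i, 0 <= Pt i) /\ UE psi Pt /\
      forall i, multi_mul P Ms i = Pt i.

End Tensors.

Definition ta : 'I_3 := @Ordinal 3 0 isT.
Definition tb : 'I_3 := @Ordinal 3 1 isT.
Definition tc : 'I_3 := @Ordinal 3 2 isT.

Definition tree_ab_c : rtree 3 :=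
  [set [set ta]; [set tb]; [set tc]; [set ta; tb]; [set ta; tb; tc]].

Section ThreeWay.
Variables (R : realFieldType) (kappa : nat).

Definition idx3 (i j k : 'I_kappa) : site 3 kappa :=
  [ffun t => tnth [tuple i; j; k] t].

(* P_{..k} : (i,j)-entry p_{ijk} *)
Definition slice3 (P : tensor R 3 kappa) (k : 'I_kappa) : 'M[R]_kappa :=
  \matrix_(i, j) P (idx3 i j k).
(* P_{+..} : (j,k)-entry sum_i p_{ijk} *)
Definition margA (P : tensor R 3 kappa) : 'M[R]_kappa :=
  \matrix_(j, k) \sum_(i : 'I_kappa) P (idx3 i j k).
(* P_{.+.} : (i,k)-entry sum_j p_{ijk} *)
Definition margB (P : tensor R 3 kappa) : 'M[R]_kappa :=
  \matrix_(i, k) \sum_(j : 'I_kappa) P (idx3 i j k).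

Definition block3 (A11 A12 A13 A21 A22 A23 A31 A32 A33 : 'M[R]_kappa)
  : 'M[R]_(kappa + (kappa + kappa)) :=
  col_mx (row_mx A11 (row_mx A12 A13))
    (col_mx (row_mx A21 (row_mx A22 A23)) (row_mx A31 (row_mx A32 A33))).

Definition flatM1 (P : tensor R 3 kappa) (k : 'I_kappa) :=
  block3 0 (slice3 P k) (margB P)
         (- (slice3 P k)^T) 0 (margA P)
         (- (margB P)^T) (- (margA P)^T) 0.

Definition flatM2 (P : tensor R 3 kappa) (k : 'I_kappa) :=
  block3 0 (margB P)^T (margA P)^T
         (- margB P) 0 (slice3 P k)
         (- margA P) (- (slice3 P k)^T) 0.

End ThreeWay.

(* Main.v *)
Require Import Defs.
From HB Require Import structures.
From mathcomp Require Import all_boot all_order all_algebra all_fingroup.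
Import Order.TTheory GRing.Theory Num.Theory.
Local Open Scope ring_scope.
From mathcomp Require Import ring.

Section Blocks.
Variables (R : realFieldType) (kappa : nat).
Local Notation M := ('M[R]_kappa).

Lemma block3E (A11 A12 A13 A21 A22 A23 A31 A32 A33 : M) :
  block3 A11 A12 A13 A21 A22 A23 A31 A32 A33 =
  block_mx A11 (row_mx A12 A13) (col_mx A21 A31) (block_mx A22 A23 A32 A33).
Proof. by rewrite /block3 block_mxEv [block_mx A22 _ _ _]block_mxEv -block_mxEh block_mxEv. Qed.

Lemma mul_block3 (A11 A12 A13 A21 A22 A23 A31 A32 A33 : M)
  (B11 B12 B13 B21 B22 B23 B31 B32 B33 : M) :
  block3 A11 A12 A13 A21 A22 A23 A31 A32 A33 *m
  block3 B11 B12 B13 B21 B22 B23 B31 B32 B33 =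
  block3 (A11 *m B11 + A12 *m B21 + A13 *m B31)
         (A11 *m B12 + A12 *m B22 + A13 *m B32)
         (A11 *m B13 + A12 *m B23 + A13 *m B33)
         (A21 *m B11 + A22 *m B21 + A23 *m B31)
         (A21 *m B12 + A22 *m B22 + A23 *m B32)
         (A21 *m B13 + A22 *m B23 + A23 *m B33)
         (A31 *m B11 + A32 *m B21 + A33 *m B31)
         (A31 *m B12 + A32 *m B22 + A33 *m B32)
         (A31 *m B13 + A32 *m B23 + A33 *m B33).
Proof.
rewrite !block3E mulmx_block. rewrite mul_row_col mul_mx_row mul_row_block mul_col_mx
  mul_block_col mul_col_row mulmx_block add_row_mx add_col_mx add_block_mx.
by rewrite !addrA.
Qed.

Lemma tr_block3 (A11 A12 A13 A21 A22 A23 A31 A32 A33 : M) :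
  (block3 A11 A12 A13 A21 A22 A23 A31 A32 A33)^T =
  block3 A11^T A21^T A31^T A12^T A22^T A32^T A13^T A23^T A33^T.
Proof. by rewrite !block3E tr_block_mx tr_row_mx tr_col_mx tr_block_mx. Qed.

Lemma rank_low (A11 A12 A13 A21 A31 : M) :
  (\rank (block3 A11 A12 A13 A21 0 0 A31 0 0) <= 2 * kappa)%N.
Proof.
rewrite /block3.
have -> : row_mx A21 (row_mx (0 : M) (0 : M)) = A21 *m row_mx 1%:M (row_mx (0:M) (0:M)).
  by rewrite !mul_mx_row mulmx1 !mulmx0.
have -> : row_mx A31 (row_mx (0 : M) (0 : M)) = A31 *m row_mx 1%:M (row_mx (0:M) (0:M)).
  by rewrite !mul_mx_row mulmx1 !mulmx0.
rewrite -mul_col_mx.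
rewrite -addsmxE.
apply: leq_trans (mxrank_adds_leqif _ _) _.
rewrite mul2n -addnn leq_add ?rank_leq_row //.
exact: mulmx_max_rank.
Qed.


Lemma rank_G1 (S B : M) : S^T = S ->
  (\rank (block3 0 S B (- S^T) 0 B (- B^T) (- B^T) 0) <= 2 * kappa)%N.
Proof.
move=> sS.
have -> : block3 0 S B (- S^T) 0 B (- B^T) (- B^T) 0 =
  block3 1%:M 0 0 1%:M 1%:M 0 0 0 1%:M *m
  (block3 0 S B (- S) 0 0 (- B^T) 0 0 *m block3 1%:M 1%:M 0 0 1%:M 0 0 0 1%:M).
  rewrite !mul_block3 ?mul0mx ?mulmx0 ?mul1mx ?mulmx1 ?addr0 ?add0r sS.
  by rewrite subrr.
apply: leq_trans (mxrankM_maxr _ _) _.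
apply: leq_trans (mxrankM_maxl _ _) _.
exact: rank_low.
Qed.

Lemma rank_mid (Y W Z V : M) :
  (\rank (block3 0 Y 0 W 0 Z 0 V 0) <= 2 * kappa)%N.
Proof.
have -> : block3 0 Y 0 W 0 Z 0 V 0 =
  block3 0 1%:M 0 1%:M 0 0 0 0 1%:M *m
  (block3 0 W Z Y 0 0 V 0 0 *m block3 0 1%:M 0 1%:M 0 0 0 0 1%:M).
  rewrite mul_block3 ?mul0mx ?mulmx0 ?mul1mx ?mulmx1 ?addr0 ?add0r.
  rewrite mul_block3 ?mul0mx ?mulmx0 ?mul1mx ?mulmx1 ?addr0 ?add0r.
  by [].
apply: leq_trans (mxrankM_maxr _ _) _.
apply: leq_trans (mxrankM_maxl _ _) _.
exact: rank_low.
Qed.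

Lemma rank_G2 (S B : M) : S^T = S ->
  (\rank (block3 0 B^T B^T (- B) 0 S (- B) (- S^T) 0) <= 2 * kappa)%N.
Proof.
move=> sS.
have -> : block3 0 B^T B^T (- B) 0 S (- B) (- S^T) 0 =
  block3 1%:M 0 0 0 1%:M 0 0 1%:M 1%:M *m
  (block3 0 B^T 0 (- B) 0 S 0 (- S) 0 *m block3 1%:M 0 0 0 1%:M 1%:M 0 0 1%:M).
  rewrite mul_block3 ?mul0mx ?mulmx0 ?mul1mx ?mulmx1 ?addr0 ?add0r.
  rewrite mul_block3 ?mul0mx ?mulmx0 ?mul1mx ?mulmx1 ?addr0 ?add0r sS.
  by rewrite ?subrr ?addrN.
apply: leq_trans (mxrankM_maxr _ _) _.
apply: leq_trans (mxrankM_maxl _ _) _.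
exact: rank_mid.
Qed.

End Blocks.
Section Tens.
Variables (R : realFieldType) (kappa : nat).
Implicit Types (i j k : 'I_kappa).

Lemma idx3_a i j k : idx3 i j k ta = i. Proof. by rewrite /idx3 ffunE. Qed.
Lemma idx3_b i j k : idx3 i j k tb = j. Proof. by rewrite /idx3 ffunE. Qed.
Lemma idx3_c i j k : idx3 i j k tc = k. Proof. by rewrite /idx3 ffunE. Qed.

Lemma upd_a i j k l :
  [ffun t => if t == ta then l else idx3 i j k t] = idx3 l j k.
Proof. by apply/ffunP => -[[|[|[|t]]] Ht]; rewrite /idx3 !ffunE. Qed.
Lemma upd_b i j k l :
  [ffun t => if t == tb then l else idx3 i j k t] = idx3 i l k.
Proof. by apply/ffunP => -[[|[|[|t]]] Ht]; rewrite /idx3 !ffunE. Qed.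
Lemma upd_c i j k l :
  [ffun t => if t == tc then l else idx3 i j k t] = idx3 i j l.
Proof. by apply/ffunP => -[[|[|[|t]]] Ht]; rewrite /idx3 !ffunE. Qed.

Lemma enum3 : enum 'I_3 = [:: ta; tb; tc].
Proof. by apply: (inj_map val_inj); rewrite val_enum_ord. Qed.

Lemma multi3 (P : tensor R 3 kappa) (Ms : 'I_3 -> 'M[R]_kappa) i j k :
  multi_mul P Ms (idx3 i j k) =
  \sum_c \sum_b \sum_a P (idx3 a b c) * Ms ta a i * Ms tb b j * Ms tc c k.
Proof.
rewrite /multi_mul enum3 /= /mode_mul.
apply: eq_bigr => c _; rewrite upd_c idx3_c mulr_suml.
apply: eq_bigr => b _; rewrite upd_b idx3_b !mulr_suml.
apply: eq_bigr => a _; rewrite upd_a idx3_a.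
by [].
Qed.

End Tens.

Section Facts.
Variables (R : realFieldType) (kappa : nat).
Variables (P Pt : tensor R 3 kappa) (M1 M2 M3 : 'M[R]_kappa).
Hypothesis hPt : forall i j k, Pt (idx3 i j k) =
  \sum_c \sum_b \sum_a P (idx3 a b c) * M1 a i * M2 b j * M3 c k.

Lemma sliceE c : slice3 Pt c = \sum_c' M3 c' c *: (M1^T *m slice3 P c' *m M2).
Proof.
apply/matrixP => i j; rewrite mxE hPt summxE; apply: eq_bigr => c' _.
rewrite !mxE mulr_sumr; apply: eq_bigr => b _.
rewrite !mxE !mulr_suml mulr_sumr; apply: eq_bigr => a _.
rewrite !mxE; ring.
Qed.

Hypothesis hM2 : forall b, \sum_j M2 b j = 1.
Hypothesis hM1 : forall a, \sum_j M1 a j = 1.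

Lemma margBE : margB Pt = M1^T *m margB P *m M3.
Proof.
apply/matrixP => i k; rewrite !mxE.
under eq_bigr => j _ do rewrite hPt.
rewrite [LHS]exchange_big; apply: eq_bigr => c _.
rewrite [LHS]exchange_big /=.
under eq_bigr => b _ do rewrite exchange_big /=.
rewrite [LHS]exchange_big /= !mxE mulr_suml; apply: eq_bigr => a _.
rewrite !mxE mulr_sumr mulr_suml; apply: eq_bigr => b _.
transitivity (\sum_j P (idx3 a b c) * M1 a i * M3 c k * M2 b j).
  by apply: eq_bigr => j _; ring.
by rewrite -mulr_sumr hM2 ?mxE; ring.
Qed.

Lemma margAE : margA Pt = M2^T *m margA P *m M3.
Proof.
apply/matrixP => j k; rewrite !mxE.
under eq_bigr => i _ do rewrite hPt.
rewrite [LHS]exchange_big; apply: eq_bigr => c _.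
rewrite [LHS]exchange_big /=.
under eq_bigr => b _ do rewrite exchange_big /=.
rewrite !mxE mulr_suml; apply: eq_bigr => b _.
rewrite !mxE mulr_sumr mulr_suml; apply: eq_bigr => a _.
transitivity (\sum_i P (idx3 a b c) * M2 b j * M3 c k * M1 a i).
  by apply: eq_bigr => i _; ring.
by rewrite -mulr_sumr hM1 ?mxE; ring.
Qed.

End Facts.

Lemma marg_setT (R : realFieldType) (kappa : nat) (Q : tensor R 3 kappa) i :
  marg setT Q i = Q i.
Proof.
rewrite /marg (big_pred1 i) // => j /=.
apply/forallP/eqP => [h|->]; last by move=> t; rewrite eqxx implybT.
by apply/ffunP => t; move: (h t); rewrite in_setT /= => /eqP.
Qed.

Lemma UE_sym (R : realFieldType) (kappa : nat) (Q : tensor R 3 kappa) :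
  UE tree_ab_c Q -> forall i j k, Q (idx3 i j k) = Q (idx3 j i k).
Proof.
case=> _ h i j k.
have h2 : is_2clade tree_ab_c setT ta tb.
  split => //; exists [set ta; tb]; last by rewrite setIT.
  by rewrite /tree_ab_c !inE eqxx !orbT.
have := h _ _ _ h2 (idx3 i j k); rewrite !marg_setT => <-.
congr Q; apply/ffunP => -[[|[|[|t]]] Ht]; rewrite /swap_site /idx3 !ffunE //=.
all: rewrite permE /= /eq_op /=; by [].
Qed.

Lemma cancel2 (R : realFieldType) (kappa : nat) (M M' Y : 'M[R]_kappa) :
  M \in unitmx -> M' \in unitmx ->
  (invmx M)^T *m (M^T *m Y *m M') *m invmx M' = Y.
Proof.
move=> uM uM'.
by rewrite !mulmxA -trmx_mul mulmxV // trmx1 mul1mx -mulmxA mulmxV // mulmx1.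
Qed.



Theorem corollary6p4 (R : realFieldType) (kappa : nat) (hk : (2 <= kappa)%N)
  (P : tensor R 3 kappa) (hP : EE tree_ab_c P) :
  forall k : 'I_kappa,
    (\rank (flatM1 P k) <= 2 * kappa)%N /\ (\rank (flatM2 P k) <= 2 * kappa)%N.
Proof.
case: hP => _ [Ms [hMs [Pt [_ [hUE heq]]]]] k.
pose M1 := Ms ta; pose M2 := Ms tb; pose M3 := Ms tc.
have hPt : forall i j c, Pt (idx3 i j c) =
  \sum_c0 \sum_b \sum_a P (idx3 a b c0) * M1 a i * M2 b j * M3 c0 c.
  by move=> i j c; rewrite -heq multi3.
have [[_ hM1] uM1] := hMs ta.
have [[_ hM2] uM2] := hMs tb.
have [[_ hM3] uM3] := hMs tc.
have hsym := @UE_sym _ _ _ hUE.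
have eAB : margA Pt = margB Pt.
  by apply/matrixP => j c; rewrite !mxE; apply: eq_bigr => i _; rewrite hsym.
have eB : margB Pt = M1^T *m margB P *m M3 by exact: (@margBE _ _ _ _ _ _ _ hPt hM2).
have eA : margB Pt = M2^T *m margA P *m M3 by rewrite -eAB; exact: (@margAE _ _ _ _ _ _ _ hPt hM1).
have eS : M1^T *m slice3 P k *m M2 = \sum_c invmx M3 c k *: slice3 Pt c.
  under eq_bigr => c _ do rewrite (@sliceE _ _ _ _ _ _ _ hPt) scaler_sumr.
  rewrite exchange_big /=.
  have hMN c' : \sum_c invmx M3 c k * M3 c' c = (1%:M : 'M[R]_kappa) c' k.
    by rewrite -(mulmxV uM3) mxE; apply: eq_bigr => c _; rewrite mulrC.
  under eq_bigr => c' _ do (under eq_bigr => c _ do rewrite scalerA; rewrite -scaler_suml hMN).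
  rewrite (bigD1 k) //= big1 ?addr0; first by rewrite mxE eqxx scale1r.
  by move=> c' /negbTE ne; rewrite mxE ne scale0r.
have sS : (M1^T *m slice3 P k *m M2)^T = M1^T *m slice3 P k *m M2.
  rewrite eS; apply/matrixP => i j; rewrite mxE !summxE; apply: eq_bigr => c _.
  by rewrite !mxE hsym.
pose D := block3 (invmx M1) 0 0 0 (invmx M2) 0 0 0 (invmx M3).
split.
{ have -> : flatM1 P k = D^T *m block3 0 (M1^T *m slice3 P k *m M2) (margB Pt)
      (- (M1^T *m slice3 P k *m M2)^T) 0 (margB Pt)
      (- (margB Pt)^T) (- (margB Pt)^T) 0 *m D.
    rewrite /flatM1 tr_block3 !mul_block3 ?trmx0 ?mul0mx ?mulmx0 ?addr0 ?add0r.
    congr block3.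
    + by rewrite mul0mx.
    + by rewrite cancel2.
    + by rewrite eB cancel2.
    + by rewrite mulmxN mulNmx !trmx_mul trmxK mulmxA cancel2.
    + by rewrite mul0mx.
    + by rewrite eA cancel2.
    + by rewrite mulmxN mulNmx eB !trmx_mul trmxK mulmxA cancel2.
    + by rewrite mulmxN mulNmx eA !trmx_mul trmxK mulmxA cancel2.
    + by rewrite mul0mx.
  apply: leq_trans (mxrankM_maxl _ _) _.
  apply: leq_trans (mxrankM_maxr _ _) _.
  exact (@rank_G1 R kappa _ (margB Pt) sS). }
have -> : flatM2 P k = (block3 (invmx M3) 0 0 0 (invmx M1) 0 0 0 (invmx M2))^T *m
    block3 0 (margB Pt)^T (margB Pt)^T (- margB Pt) 0 (M1^T *m slice3 P k *m M2)
      (- margB Pt) (- (M1^T *m slice3 P k *m M2)^T) 0 *m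
    block3 (invmx M3) 0 0 0 (invmx M1) 0 0 0 (invmx M2).
  rewrite /flatM2 tr_block3 !mul_block3 ?trmx0 ?mul0mx ?mulmx0 ?addr0 ?add0r.
  congr block3.
  + by rewrite mul0mx.
  + by rewrite eB !trmx_mul trmxK mulmxA cancel2.
  + by rewrite eA !trmx_mul trmxK mulmxA cancel2.
  + by rewrite mulmxN mulNmx eB cancel2.
  + by rewrite mul0mx.
  + by rewrite cancel2.
  + by rewrite mulmxN mulNmx eA cancel2.
  + by rewrite mulmxN mulNmx !trmx_mul trmxK mulmxA cancel2.
  + by rewrite mul0mx.
apply: leq_trans (mxrankM_maxl _ _) _.
apply: leq_trans (mxrankM_maxr _ _) _.
exact (@rank_G2 R kappa _ (margB Pt) sS).
Qed.
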